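(* Let $\mathfrak p=(p,q)$ with $p$ odd and $q$ divisible by four, and $\Gamma=\Gamma_{\mathfrak p}$. Then $0\in\operatorname{int}B_j^\Gamma$ for some $1\le j\le pq$.
   Context: For $r\ge3$ and $\theta\in\mathbb R$, $\Delta_\theta^r\in\mathbb C^{r\times r}$ is the Hermitian matrix with $1$ on the sub- and superdiagonals, $0$ on the diagonal, entry $e^{-i\theta}$ in position $(1,r)$ and $e^{i\theta}$ in position $(r,1)$, all other entries $0$; $\Delta_\theta^1=2\cos\theta$, $\Delta_\theta^2=\begin{bmatrix}0&1+e^{-i\theta}\\1+e^{i\theta}&0\end{bmatrix}$. $\Gamma_{\mathfrak p}=([0,p)\times[0,q))\cap\mathbb Z^2$, $\Delta^{\Gamma}_{\theta,\varphi}=\Delta_\theta^p\otimes I_q+I_p\otimes\Delta_\varphi^q$, with eigenvalues $\lambda_1^\Gamma(\theta,\varphi)\le\cdots\le\lambda_{pq}^\Gamma(\theta,\varphi)$ counted with multiplicity, and bands $B_j^\Gamma=\{\lambda_j^\Gamma(\theta,\varphi):(\theta,\varphi)\in[0,\pi]^2\}$. *)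

(* Defs.v *)
From Stdlib Require Import Reals Lra Lia Arith.
Open Scope R_scope.

Definition C := (R * R)%type.
Definition C0 : C := (0, 0).
Definition C1 : C := (1, 0).
Definition RtoC (x : R) : C := (x, 0).
Definition Cadd (z w : C) : C := (fst z + fst w, snd z + snd w).
Definition Cmul (z w : C) : C :=
  (fst z * fst w - snd z * snd w, fst z * snd w + snd z * fst w).
Definition Cconj (z : C) : C := (fst z, - snd z).
Definition Cexpi (t : R) : C := (cos t, sin t).

Fixpoint csum (n : nat) (f : nat -> C) : C :=
  match n with
  | O => C0
  | S m => Cadd (csum m f) (f m)
  end.

(** Square matrices of size n are functions on indices 0..n-1
    (paper's row/column i corresponds to index i-1 here). *)
Definition mat := nat -> nat -> C.

Definition Delta (r : nat) (theta : R) : mat :=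
  fun i j =>
  match r with
  | O => C0
  | 1%nat => if andb (Nat.eqb i 0) (Nat.eqb j 0) then RtoC (2 * cos theta) else C0
  | 2%nat =>
      if andb (Nat.eqb i 0) (Nat.eqb j 1) then Cadd C1 (Cexpi (- theta))
      else if andb (Nat.eqb i 1) (Nat.eqb j 0) then Cadd C1 (Cexpi theta)
      else C0
  | _ =>
      if orb (Nat.eqb (S i) j) (Nat.eqb (S j) i) then C1
      else if andb (Nat.eqb i 0) (Nat.eqb j (r - 1)) then Cexpi (- theta)
      else if andb (Nat.eqb i (r - 1)) (Nat.eqb j 0) then Cexpi theta
      else C0
  end.

Definition Imat : mat := fun i j => if Nat.eqb i j then C1 else C0.

(** Kronecker product A (x) B where B is m x m: row index (a,b) |-> a*m+b *)
Definition kron (m : nat) (A B : mat) : mat :=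
  fun i j => Cmul (A (i / m)%nat (j / m)%nat) (B (i mod m)%nat (j mod m)%nat).

Definition madd (A B : mat) : mat := fun i j => Cadd (A i j) (B i j).

Definition DeltaGamma (p q : nat) (theta phi : R) : mat :=
  madd (kron q (Delta p theta) Imat) (kron q Imat (Delta q phi)).

(** [l 0 <= l 1 <= ... <= l (n-1)] are the eigenvalues of the (Hermitian)
    n x n matrix M counted with multiplicity: there is a unitary U whose
    j-th column is an eigenvector of M for the eigenvalue l j
    (i.e. M U = U diag(l), U^* U = I). *)
Definition is_sorted_eigs (n : nat) (M : mat) (l : nat -> R) : Prop :=
  (forall j, (S j < n)%nat -> l j <= l (S j)) /\
  exists U : mat,
    (forall i j, (i < n)%nat -> (j < n)%nat ->
       csum n (fun k => Cmul (Cconj (U k i)) (U k j)) = Imat i j) /\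
    (forall i j, (i < n)%nat -> (j < n)%nat ->
       csum n (fun k => Cmul (M i k) (U k j)) = Cmul (U i j) (RtoC (l j))).

Definition lambdaGamma (p q : nat) (j : nat) (theta phi x : R) : Prop :=
  exists l, is_sorted_eigs (p * q) (DeltaGamma p q theta phi) l /\ l (j - 1)%nat = x.

Definition band (p q j : nat) (x : R) : Prop :=
  exists theta phi, 0 <= theta <= PI /\ 0 <= phi <= PI /\ lambdaGamma p q j theta phi x.

Definition in_interior (S : R -> Prop) (x : R) : Prop :=
  exists eps, 0 < eps /\ forall y, Rabs (y - x) < eps -> S y.

(* Main.v *)
From Stdlib Require Import Reals Lra Lia Arith List Permutation Sorting ZArith.
Require Import Defs.
Open Scope R_scope.

Lemma Ceq (z w : C) : fst z = fst w -> snd z = snd w -> z = w.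
Proof. destruct z, w; simpl; intros; subst; reflexivity. Qed.

Ltac cring := apply Ceq; simpl; ring.

Lemma Cadd_comm z w : Cadd z w = Cadd w z. Proof. unfold Cadd; cring. Qed.
Lemma Cadd_assoc z w v : Cadd (Cadd z w) v = Cadd z (Cadd w v). Proof. unfold Cadd; cring. Qed.
Lemma Cadd_0_l z : Cadd C0 z = z. Proof. unfold Cadd, C0; cring. Qed.
Lemma Cadd_0_r z : Cadd z C0 = z. Proof. unfold Cadd, C0; cring. Qed.
Lemma Cmul_comm z w : Cmul z w = Cmul w z. Proof. unfold Cmul; cring. Qed.
Lemma Cmul_assoc z w v : Cmul (Cmul z w) v = Cmul z (Cmul w v). Proof. unfold Cmul; cring. Qed.
Lemma Cmul_0_l z : Cmul C0 z = C0. Proof. unfold Cmul, C0; cring. Qed.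
Lemma Cmul_0_r z : Cmul z C0 = C0. Proof. unfold Cmul, C0; cring. Qed.
Lemma Cmul_1_l z : Cmul C1 z = z. Proof. unfold Cmul, C1; cring. Qed.
Lemma Cmul_1_r z : Cmul z C1 = z. Proof. unfold Cmul, C1; cring. Qed.
Lemma Cmul_add_l z w v : Cmul (Cadd z w) v = Cadd (Cmul z v) (Cmul w v). Proof. unfold Cmul, Cadd; cring. Qed.
Lemma Cmul_add_r z w v : Cmul v (Cadd z w) = Cadd (Cmul v z) (Cmul v w). Proof. unfold Cmul, Cadd; cring. Qed.

Lemma csum_ext n f g : (forall k, (k < n)%nat -> f k = g k) -> csum n f = csum n g.
Proof. induction n; simpl; intros H; auto. rewrite IHn by (intros; apply H; lia). rewrite H by lia. auto. Qed.

Lemma csum_add n f g : csum n (fun k => Cadd (f k) (g k)) = Cadd (csum n f) (csum n g).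
Proof. induction n; simpl. unfold Cadd, C0; cring. rewrite IHn. unfold Cadd; cring. Qed.

Lemma csum_mul_l n c f : Cmul c (csum n f) = csum n (fun k => Cmul c (f k)).
Proof. induction n; simpl. unfold Cmul, C0; cring. rewrite <- IHn. unfold Cmul, Cadd; cring. Qed.

Lemma csum_mul_r n c f : Cmul (csum n f) c = csum n (fun k => Cmul (f k) c).
Proof. rewrite Cmul_comm, csum_mul_l. apply csum_ext; intros; apply Cmul_comm. Qed.

Lemma csum_zero n f : (forall k, (k < n)%nat -> f k = C0) -> csum n f = C0.
Proof. induction n; simpl; intros H; auto. rewrite IHn, H by (try intros; try apply H; lia). unfold Cadd, C0; cring. Qed.

Lemma csum_app n m f : csum (n + m) f = Cadd (csum n f) (csum m (fun i => f (n + i)%nat)).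
Proof. induction m; simpl. rewrite Nat.add_0_r. unfold Cadd, C0; cring.
  rewrite Nat.add_succ_r. simpl. rewrite IHm. apply Cadd_assoc. Qed.

Lemma csum_prod p q f : csum (p * q) f = csum p (fun a => csum q (fun b => f (a * q + b)%nat)).
Proof. induction p; simpl; auto. rewrite Nat.add_comm, csum_app, IHp. auto. Qed.

Lemma csum_point n t c f : (t < n)%nat -> (forall k, (k < n)%nat -> k <> t -> f k = C0) -> f t = c -> csum n f = c.
Proof. induction n; intros Ht H Hc. lia. simpl. destruct (Nat.eq_dec t n).
  - subst. rewrite csum_zero. apply Cadd_0_l. intros; apply H; lia.
  - rewrite IHn; auto; try lia. rewrite H by lia. apply Cadd_0_r. Qed.

Lemma csum_two n t1 t2 f : (t1 < n)%nat -> (t2 < n)%nat -> t1 <> t2 ->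
  (forall k, (k < n)%nat -> k <> t1 -> k <> t2 -> f k = C0) -> csum n f = Cadd (f t1) (f t2).
Proof. induction n; intros H1 H2 H12 H. lia. simpl. destruct (Nat.eq_dec t1 n); [|destruct (Nat.eq_dec t2 n)].
  - subst. rewrite (csum_point n t2 (f t2)); auto; try lia. apply Cadd_comm. intros; apply H; lia.
  - subst. rewrite (csum_point n t1 (f t1)); auto; try lia. intros; apply H; lia.
  - rewrite IHn; auto; try lia. rewrite (H n) by lia. apply Cadd_0_r. Qed.

Lemma Cexpi_mul x y : Cmul (Cexpi x) (Cexpi y) = Cexpi (x + y).
Proof. unfold Cmul, Cexpi; apply Ceq; simpl; rewrite ?cos_plus, ?sin_plus; ring. Qed.

Lemma Cexpi_sum2 x a : Cadd (Cexpi (x - a)) (Cexpi (x + a)) = Cmul (Cexpi x) (RtoC (2 * cos a)).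
Proof. unfold Cmul, Cexpi, Cadd, RtoC; apply Ceq; simpl;
  unfold Rminus; rewrite ?cos_plus, ?sin_plus, ?cos_neg, ?sin_neg; ring. Qed.

Lemma Cexpi_0 : Cexpi 0 = C1.
Proof. unfold Cexpi, C1; rewrite cos_0, sin_0; auto. Qed.

Definition alpha (r : nat) (th : R) (k : nat) : R := (th + 2 * PI * INR k) / INR r.
Definition lam (r : nat) (th : R) (k : nat) : R := 2 * cos (alpha r th k).
Definition uvec (r : nat) (th : R) (k a : nat) : C :=
  Cmul (RtoC (/ sqrt (INR r))) (Cexpi (INR a * alpha r th k)).

Lemma geom_tele n g : Cmul (Cadd (Cexpi g) (RtoC (-1))) (csum n (fun a => Cexpi (INR a * g)))
  = Cadd (Cexpi (INR n * g)) (RtoC (-1)).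
Proof. induction n.
  - simpl. unfold Cmul, Cadd, C0, RtoC, Cexpi; apply Ceq; simpl; rewrite ?Rmult_0_l, ?cos_0, ?sin_0; ring.
  - simpl csum. rewrite Cmul_add_r, IHn. rewrite S_INR.
    replace ((INR n + 1) * g) with (INR n * g + g) by ring.
    unfold Cmul, Cadd, RtoC, Cexpi; apply Ceq; simpl; rewrite ?cos_plus, ?sin_plus; ring. Qed.

Lemma Cmul_eq0 w s : w <> C0 -> Cmul w s = C0 -> s = C0.
Proof. destruct w as [x y], s as [a b]; unfold Cmul, C0; simpl; intros Hw H.
  injection H; intros H1 H2.
  assert (Hxy : x * x + y * y <> 0).
  { intro Hc. apply Hw. assert (Ex : x * x = 0) by nra. assert (Ey : y * y = 0) by nra.
    apply Rmult_integral in Ex; apply Rmult_integral in Ey. f_equal; lra. }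
  assert (a * (x*x+y*y) = x * (x*a - y*b) + y * (x*b + y*a)) as E1 by ring.
  assert (b * (x*x+y*y) = x * (x*b + y*a) - y * (x*a - y*b)) as E2 by ring.
  rewrite H1, H2, ?Rmult_0_r in E1, E2.
  f_equal. apply (Rmult_eq_reg_r (x*x+y*y)); auto; lra. apply (Rmult_eq_reg_r (x*x+y*y)); auto; lra. Qed.

Lemma INR_Z n : INR n = IZR (Z.of_nat n). Proof. apply INR_IZR_INZ. Qed.

Lemma geom_zero r (l k : nat) : (0 < r)%nat -> (l < r)%nat -> (k < r)%nat -> l <> k ->
  csum r (fun a => Cexpi (INR a * (2 * PI * (INR l - INR k) / INR r))) = C0.
Proof. intros Hr Hl Hk Hlk.
  set (g := 2 * PI * (INR l - INR k) / INR r).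
  assert (HrR : INR r <> 0) by (apply not_0_INR; lia).
  apply (Cmul_eq0 (Cadd (Cexpi g) (RtoC (-1)))).
  - intro H. unfold Cadd, Cexpi, RtoC, C0 in H; simpl in H. injection H; intros Hs Hc.
    assert (Hc1 : cos g = 1) by lra.
    replace g with (2 * (g/2)) in Hc1 by field. rewrite cos_2a_sin in Hc1.
    assert (sin (g/2) = 0) by nra.
    destruct (sin_eq_0_0 _ H0) as [j Hj].
    unfold g in Hj. rewrite !INR_Z in Hj.
    assert (HZ : IZR (Z.of_nat l - Z.of_nat k) = IZR (j * Z.of_nat r)).
    { rewrite minus_IZR, mult_IZR. rewrite INR_Z in HrR.
      assert (PI <> 0) by (generalize PI_RGT_0; lra).
      apply (Rmult_eq_reg_r (PI / IZR (Z.of_nat r))). 2: { apply Rmult_integral_contrapositive; split; auto; apply Rinv_neq_0_compat; auto. }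
      replace ((IZR (Z.of_nat l) - IZR (Z.of_nat k)) * (PI / IZR (Z.of_nat r))) with
        (2 * PI * (IZR (Z.of_nat l) - IZR (Z.of_nat k)) / IZR (Z.of_nat r) / 2) by (field; auto).
      rewrite Hj. field. auto. }
    apply eq_IZR in HZ. destruct (Z.lt_trichotomy j 0) as [Hj0|[Hj0|Hj0]]; [ | subst; lia | ]; nia.
  - rewrite geom_tele.
    replace (INR r * g) with (2 * PI * (INR l - INR k)) by (unfold g; field; auto).
    unfold Cadd, Cexpi, RtoC, C0; apply Ceq; simpl.
    + destruct (le_lt_dec k l).
      * rewrite <- minus_INR by auto. replace (2 * PI * INR (l - k)) with (0 + 2 * INR (l - k) * PI) by ring.
        rewrite cos_period, cos_0; ring.
      * replace (2 * PI * (INR l - INR k)) with (- (0 + 2 * INR (k - l) * PI)) by (rewrite minus_INR by lia; ring).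
        rewrite cos_neg, cos_period, cos_0; ring.
    + destruct (le_lt_dec k l).
      * rewrite <- minus_INR by auto. replace (2 * PI * INR (l - k)) with (0 + 2 * INR (l - k) * PI) by ring.
        rewrite sin_period, sin_0; ring.
      * replace (2 * PI * (INR l - INR k)) with (- (0 + 2 * INR (k - l) * PI)) by (rewrite minus_INR by lia; ring).
        rewrite sin_neg, sin_period, sin_0; ring.
Qed.

Lemma uvec_orth r th k l : (0 < r)%nat -> (k < r)%nat -> (l < r)%nat ->
  csum r (fun a => Cmul (Cconj (uvec r th k a)) (uvec r th l a)) = Imat k l.
Proof. intros Hr Hk Hl.
  assert (HrR : INR r <> 0) by (apply not_0_INR; lia).
  assert (Hpos : 0 < INR r) by (apply lt_0_INR; lia).
  assert (Hs : / sqrt (INR r) * / sqrt (INR r) = / INR r).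
  { rewrite <- Rinv_mult, sqrt_sqrt; lra. }
  rewrite (csum_ext _ _ (fun a => Cmul (RtoC (/ INR r)) (Cexpi (INR a * (2 * PI * (INR l - INR k) / INR r))))).
  2: { intros a _. unfold uvec, alpha, Cmul, Cconj, RtoC, Cexpi; apply Ceq; simpl.
       - replace (INR a * (2 * PI * (INR l - INR k) / INR r)) with
           (INR a * ((th + 2 * PI * INR l) / INR r) - INR a * ((th + 2 * PI * INR k) / INR r)) by (field; auto).
         rewrite cos_minus. rewrite <- Hs. ring.
       - replace (INR a * (2 * PI * (INR l - INR k) / INR r)) with
           (INR a * ((th + 2 * PI * INR l) / INR r) - INR a * ((th + 2 * PI * INR k) / INR r)) by (field; auto).
         unfold Rminus. rewrite sin_plus, sin_neg, cos_neg. rewrite <- Hs. ring. }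
  rewrite <- csum_mul_l. unfold Imat. destruct (Nat.eqb_spec k l).
  - subst. rewrite (csum_ext _ _ (fun _ => C1)).
    2: { intros a _. replace (INR a * (2 * PI * (INR l - INR l) / INR r)) with 0 by (field; auto). apply Cexpi_0. }
    assert (Hc : forall n, csum n (fun _ => C1) = RtoC (INR n)).
    { induction n; simpl; auto. rewrite IHn. unfold Cadd, RtoC, C1; simpl. destruct n; simpl; f_equal; ring. }
    rewrite Hc. unfold Cmul, RtoC, C1; apply Ceq; simpl; field; auto.
  - rewrite geom_zero; auto. apply Cmul_0_r.
Qed.

Lemma Cexpi_per x k : Cexpi (x + 2 * INR k * PI) = Cexpi x.
Proof. unfold Cexpi; rewrite cos_period, sin_period; auto. Qed.

Ltac dest_eqb := repeat match goal with |- context[Nat.eqb ?x ?y] => destruct (Nat.eqb_spec x y) end; cbn [orb andb Nat.eqb].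

Lemma Delta3 r' th s a : Delta (S (S (S r'))) th s a =
  if orb (Nat.eqb (S s) a) (Nat.eqb (S a) s) then C1
  else if andb (Nat.eqb s 0) (Nat.eqb a (S (S r'))) then Cexpi (- th)
  else if andb (Nat.eqb s (S (S r'))) (Nat.eqb a 0) then Cexpi th else C0.
Proof. unfold Delta. replace (S (S (S r')) - 1)%nat with (S (S r')) by lia. reflexivity. Qed.

Lemma uvec_eig3 r th k s : (3 <= r)%nat -> (s < r)%nat ->
  csum r (fun a => Cmul (Delta r th s a) (uvec r th k a)) = Cmul (uvec r th k s) (RtoC (lam r th k)).
Proof. intros Hr Hs. destruct r as [|[|[|r']]]; try lia.
  set (R := S (S (S r'))).
  assert (HrR : INR R <> 0) by (apply not_0_INR; unfold R; lia).
  set (al := alpha R th k).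
  assert (Hal : INR R * al = th + 2 * PI * INR k) by (unfold al, alpha; field; auto).
  unfold uvec, lam. fold al.
  set (c := RtoC (/ sqrt (INR R))).
  assert (key : forall a, Cmul (Delta R th s a) (Cmul c (Cexpi (INR a * al))) =
     Cmul c (Cmul (Delta R th s a) (Cexpi (INR a * al)))).
  { intros. unfold Cmul; apply Ceq; simpl; ring. }
  rewrite (csum_ext _ _ _ (fun a _ => key a)). rewrite <- csum_mul_l, Cmul_assoc. f_equal.
  destruct (Nat.eq_dec s 0) as [->|Hs0]; [|destruct (Nat.eq_dec s (S (S r'))) as [->|Hs1]].
  - rewrite (csum_two _ 1 (S (S r'))); try (unfold R; lia).
    2: { intros a Ha H1 H2. unfold R; rewrite Delta3. dest_eqb; try lia; apply Cmul_0_l. }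
    unfold R; rewrite !Delta3. cbn [Nat.eqb orb andb]; rewrite ?Nat.eqb_refl; cbn [orb andb]. rewrite Cmul_1_l, Cexpi_mul.
    replace (- th + INR (S (S r')) * al) with (- al + 2 * INR k * PI).
    2: { replace (INR (S (S r'))) with (INR R - 1) by (unfold R; rewrite !S_INR; ring). lra. }
    rewrite Cexpi_per. replace (INR 0 * al) with 0 by (simpl; ring). rewrite <- (Cexpi_sum2 0 al).
    replace (INR 1 * al) with (0 + al) by (simpl; ring). replace (- al) with (0 - al) by ring.
    apply Cadd_comm.
  - rewrite (csum_two _ (S r') 0); try (unfold R; lia).
    2: { intros a Ha H1 H2. unfold R; rewrite Delta3. dest_eqb; try lia; apply Cmul_0_l. }
    unfold R; rewrite !Delta3. dest_eqb; try lia. rewrite Cmul_1_l.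
    replace (INR 0 * al) with 0 by (simpl; ring). rewrite Cexpi_mul, Rplus_0_r.
    replace (Cexpi th) with (Cexpi (INR (S (S r')) * al + al)).
    2: { rewrite <- (Cexpi_per th k). f_equal.
         replace (INR (S (S r')) * al + al) with (INR R * al) by (unfold R; rewrite (S_INR (S (S r'))); ring).
         rewrite Hal; ring. }
    replace (INR (S r') * al) with (INR (S (S r')) * al - al) by (rewrite S_INR; ring).
    apply Cexpi_sum2.
  - rewrite (csum_two _ (s - 1) (S s)); try (unfold R; lia).
    2: { intros a Ha H1 H2. unfold R; rewrite Delta3. dest_eqb; try lia; apply Cmul_0_l. }
    unfold R; rewrite !Delta3. dest_eqb; try lia; rewrite !Cmul_1_l;
    rewrite minus_INR by lia; change (INR 1) with 1; rewrite (S_INR s);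
    replace ((INR s - 1) * al) with (INR s * al - al) by ring;
    replace ((INR s + 1) * al) with (INR s * al + al) by ring;
    apply Cexpi_sum2.
Qed.

Definition EigOK (r : nat) (th : R) : Prop := forall k s, (k < r)%nat -> (s < r)%nat ->
  csum r (fun a => Cmul (Delta r th s a) (uvec r th k a)) = Cmul (uvec r th k s) (RtoC (lam r th k)).

Lemma EigOK3 r th : (3 <= r)%nat -> EigOK r th.
Proof. intros H k s _ Hs. apply uvec_eig3; auto. Qed.

Lemma EigOK1 th : EigOK 1 th.
Proof. intros k s Hk Hs. assert (k = 0%nat) by lia. assert (s = 0%nat) by lia. subst.
  unfold uvec, lam, alpha, Delta; simpl. unfold Cmul, Cadd, C0, RtoC, Cexpi; apply Ceq; simpl;
  rewrite sqrt_1, Rmult_0_l, ?cos_0, ?sin_0; replace ((th + 2 * PI * 0) / 1) with th by field; ring. Qed.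

Definition Ug (p q : nat) (th ph : R) (i j : nat) : C :=
  Cmul (uvec p th (j / q) (i / q)) (uvec q ph (j mod q) (i mod q)).
Definition mu (p q : nat) (th ph : R) (j : nat) : R := lam p th (j / q) + lam q ph (j mod q).

Lemma Cconj_mul z w : Cconj (Cmul z w) = Cmul (Cconj z) (Cconj w).
Proof. unfold Cconj, Cmul; cring. Qed.

Lemma csum_double p q f g : csum p (fun a => csum q (fun b => Cmul (f a) (g b))) = Cmul (csum p f) (csum q g).
Proof. rewrite csum_mul_r. apply csum_ext; intros. rewrite csum_mul_l; auto. Qed.

Lemma divq a b q : (b < q)%nat -> ((a * q + b) / q = a)%nat.
Proof. intros. rewrite Nat.div_add_l by lia. rewrite Nat.div_small by lia. lia. Qed.
Lemma modq a b q : (b < q)%nat -> ((a * q + b) mod q = b)%nat.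
Proof. intros. rewrite Nat.add_comm, Nat.Div0.mod_add. apply Nat.mod_small; auto. Qed.

Lemma Imat_split q i j : (0 < q)%nat -> Imat i j = Cmul (Imat (i / q)%nat (j / q)%nat) (Imat (i mod q)%nat (j mod q)%nat).
Proof. intros Hq. unfold Imat.
  destruct (Nat.eqb_spec i j); [subst; rewrite !Nat.eqb_refl; symmetry; apply Cmul_1_l|].
  destruct (Nat.eqb_spec (i / q) (j / q)); destruct (Nat.eqb_spec (i mod q) (j mod q));
   try (symmetry; apply Cmul_0_l); try (symmetry; apply Cmul_0_r).
  exfalso. apply n. rewrite (Nat.div_mod_eq i q), (Nat.div_mod_eq j q). rewrite e, e0. reflexivity. Qed.

Lemma Ug_unit p q th ph i j : (0 < p)%nat -> (0 < q)%nat -> (i < p * q)%nat -> (j < p * q)%nat ->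
  csum (p * q) (fun k => Cmul (Cconj (Ug p q th ph k i)) (Ug p q th ph k j)) = Imat i j.
Proof. intros Hp Hq Hi Hj. rewrite csum_prod.
  assert (Hi1 : (i / q < p)%nat) by (apply Nat.Div0.div_lt_upper_bound; lia).
  assert (Hj1 : (j / q < p)%nat) by (apply Nat.Div0.div_lt_upper_bound; lia).
  assert (Hi2 : (i mod q < q)%nat) by (apply Nat.mod_upper_bound; lia).
  assert (Hj2 : (j mod q < q)%nat) by (apply Nat.mod_upper_bound; lia).
  rewrite (csum_ext _ _ (fun a => csum q (fun b =>
     Cmul (Cmul (Cconj (uvec p th (i / q) a)) (uvec p th (j / q) a))
          (Cmul (Cconj (uvec q ph (i mod q) b)) (uvec q ph (j mod q) b))))).
  2: { intros a Ha. apply csum_ext; intros b Hb. unfold Ug. rewrite divq, modq by auto.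
       rewrite Cconj_mul. unfold Cmul; cring. }
  rewrite csum_double, !uvec_orth by auto. symmetry; apply Imat_split; auto. Qed.

Lemma Ug_eig p q th ph i j : (0 < p)%nat -> (0 < q)%nat -> EigOK p th -> EigOK q ph ->
  (i < p * q)%nat -> (j < p * q)%nat ->
  csum (p * q) (fun k => Cmul (DeltaGamma p q th ph i k) (Ug p q th ph k j)) =
  Cmul (Ug p q th ph i j) (RtoC (mu p q th ph j)).
Proof. intros Hp Hq Ep Eq Hi Hj. rewrite csum_prod.
  assert (Hi1 : (i / q < p)%nat) by (apply Nat.Div0.div_lt_upper_bound; lia).
  assert (Hj1 : (j / q < p)%nat) by (apply Nat.Div0.div_lt_upper_bound; lia).
  assert (Hi2 : (i mod q < q)%nat) by (apply Nat.mod_upper_bound; lia).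
  assert (Hj2 : (j mod q < q)%nat) by (apply Nat.mod_upper_bound; lia).
  set (i1 := (i / q)%nat); set (i2 := (i mod q)%nat); set (j1 := (j / q)%nat); set (j2 := (j mod q)%nat).
  rewrite (csum_ext _ _ (fun a => Cadd
     (csum q (fun b => Cmul (Cmul (Delta p th i1 a) (uvec p th j1 a)) (Cmul (Imat i2 b) (uvec q ph j2 b))))
     (csum q (fun b => Cmul (Cmul (Imat i1 a) (uvec p th j1 a)) (Cmul (Delta q ph i2 b) (uvec q ph j2 b)))))).
  2: { intros a Ha. rewrite <- csum_add. apply csum_ext; intros b Hb.
       unfold DeltaGamma, madd, kron, Ug. rewrite divq, modq by auto. fold i1 i2 j1 j2.
       unfold Cmul, Cadd; cring. }
  rewrite csum_add, !csum_double.
  rewrite Ep by auto. rewrite Eq by auto.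
  rewrite (csum_point q i2 (uvec q ph j2 i2)); auto.
  2: { intros b Hb Hne. unfold Imat. destruct (Nat.eqb_spec i2 b); [lia|]. apply Cmul_0_l. }
  2: { unfold Imat; rewrite Nat.eqb_refl; apply Cmul_1_l. }
  rewrite (csum_point p i1 (uvec p th j1 i1)); auto.
  2: { intros b Hb Hne. unfold Imat. destruct (Nat.eqb_spec i1 b); [lia|]. apply Cmul_0_l. }
  2: { unfold Imat; rewrite Nat.eqb_refl; apply Cmul_1_l. }
  unfold Ug, mu. fold i1 i2 j1 j2. unfold Cmul, Cadd, RtoC; cring. Qed.

Definition Rf (f : nat -> R) (a b : nat) : Prop := f a <= f b.

Fixpoint ins (f : nat -> R) (x : nat) (l : list nat) : list nat :=
  match l with
  | nil => x :: nil
  | y :: t => if Rle_dec (f x) (f y) then x :: y :: t else y :: ins f x t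
  end.
Fixpoint isort (f : nat -> R) (l : list nat) : list nat :=
  match l with nil => nil | x :: t => ins f x (isort f t) end.

Lemma ins_perm f x l : Permutation (ins f x l) (x :: l).
Proof. induction l; simpl; auto. destruct (Rle_dec (f x) (f a)); auto.
  eapply perm_trans. apply perm_skip, IHl. apply perm_swap. Qed.

Lemma isort_perm f l : Permutation (isort f l) l.
Proof. induction l; simpl; auto. eapply perm_trans. apply ins_perm. auto. Qed.

Lemma ins_hd f y x t : HdRel (Rf f) y t -> Rf f y x -> HdRel (Rf f) y (ins f x t).
Proof. intros H Hyx. destruct t; simpl. constructor; auto.
  destruct (Rle_dec (f x) (f n)); constructor; auto. inversion H; auto. Qed.

Lemma ins_sorted f x l : Sorted (Rf f) l -> Sorted (Rf f) (ins f x l).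
Proof. induction l; simpl; intros H. repeat constructor.
  destruct (Rle_dec (f x) (f a)).
  - constructor; auto.
  - inversion H; subst. constructor; auto. apply ins_hd; auto. unfold Rf; lra. Qed.

Lemma isort_sorted f l : Sorted (Rf f) (isort f l).
Proof. induction l; simpl; auto. apply ins_sorted; auto. Qed.

Lemma ss_nth f l : StronglySorted (Rf f) l -> forall i j, (i <= j)%nat -> (j < length l)%nat ->
  f (nth i l 0%nat) <= f (nth j l 0%nat).
Proof. induction l; intros H i j Hij Hj; simpl in *. lia.
  apply StronglySorted_inv in H as [H1 H2].
  destruct i, j; try lia. lra.
  - rewrite Forall_forall in H2. apply H2. apply nth_In. lia.
  - apply IHl; auto; lia. Qed.

Definition ordL (f : nat -> R) (n : nat) : list nat := isort f (seq 0 n).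
Definition sig (f : nat -> R) (n j : nat) : nat := nth j (ordL f n) 0%nat.
Definition ordv (f : nat -> R) (n N : nat) : R := f (sig f n N).

Lemma ordL_perm f n : Permutation (ordL f n) (seq 0 n).
Proof. apply isort_perm. Qed.
Lemma ordL_len f n : length (ordL f n) = n.
Proof. rewrite (Permutation_length (ordL_perm f n)). apply length_seq. Qed.
Lemma sig_lt f n j : (j < n)%nat -> (sig f n j < n)%nat.
Proof. intros. assert (In (sig f n j) (seq 0 n)).
  { eapply Permutation_in. apply ordL_perm. apply nth_In. rewrite ordL_len; auto. }
  apply in_seq in H0. lia. Qed.
Lemma sig_inj f n i j : (i < n)%nat -> (j < n)%nat -> sig f n i = sig f n j -> i = j.
Proof. intros. assert (ND : NoDup (ordL f n)).
  { eapply Permutation_NoDup. apply Permutation_sym, ordL_perm. apply seq_NoDup. }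
  rewrite (NoDup_nth _ 0%nat) in ND. apply (ND i j); try rewrite ordL_len; auto. Qed.
Lemma sig_sorted f n i j : (i <= j)%nat -> (j < n)%nat -> f (sig f n i) <= f (sig f n j).
Proof. intros. apply ss_nth; try rewrite ordL_len; auto.
  apply Sorted_StronglySorted. intros a b c; unfold Rf; lra. apply isort_sorted. Qed.

Fixpoint nsum (n : nat) (g : nat -> nat) : nat := match n with O => O | S m => (nsum m g + g m)%nat end.
Fixpoint lsum (l : list nat) (g : nat -> nat) : nat := match l with nil => O | x :: t => (g x + lsum t g)%nat end.

Lemma lsum_perm l l' g : Permutation l l' -> lsum l g = lsum l' g.
Proof. induction 1; simpl; lia. Qed.
Lemma lsum_app l l' g : lsum (l ++ l') g = (lsum l g + lsum l' g)%nat.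
Proof. induction l; simpl; lia. Qed.
Lemma lsum_seq n g : lsum (seq 0 n) g = nsum n g.
Proof. induction n; auto. rewrite seq_S, lsum_app; simpl. lia. Qed.
Lemma nsum_ext n g h : (forall i, (i < n)%nat -> g i = h i) -> nsum n g = nsum n h.
Proof. induction n; simpl; intros; auto. rewrite IHn, H; auto. Qed.
Lemma nsum_shift n g : nsum (S n) g = (g 0 + nsum n (fun i => g (S i)))%nat.
Proof. induction n; simpl in *; auto. rewrite IHn; lia. Qed.
Lemma lsum_nth l g : lsum l g = nsum (length l) (fun i => g (nth i l 0%nat)).
Proof. induction l; auto. change (length (a :: l)) with (S (length l)). rewrite nsum_shift. simpl. rewrite IHl. auto. Qed.

Lemma nsum_le_N n N h : (forall i, (h i <= 1)%nat) -> (forall i, (N <= i)%nat -> (i < n)%nat -> h i = 0%nat) ->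
  (nsum n h <= N)%nat.
Proof. induction n; simpl; intros H1 H2. lia.
  destruct (le_lt_dec N n). rewrite H2 by lia. rewrite Nat.add_0_r. apply IHn; auto.
  assert (forall m, nsum m h <= m)%nat. { induction m; simpl; auto. specialize (H1 m). lia. }
  specialize (H n). specialize (H1 n). lia. Qed.

Lemma nsum_one m h : (forall i, (i < m)%nat -> h i = 1%nat) -> nsum m h = m.
Proof. induction m; simpl; intros; auto. rewrite IHm, H; auto; lia. Qed.

Lemma nsum_ge_N n N h : (forall i, (i <= N)%nat -> h i = 1%nat) -> (N < n)%nat -> (N + 1 <= nsum n h)%nat.
Proof. induction n; simpl; intros H1 H2. lia.
  destruct (Nat.eq_dec N n). subst. rewrite H1 by lia. rewrite nsum_one; intros; try apply H1; lia.
  specialize (IHn H1 ltac:(lia)). lia. Qed.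

Definition ind (b : bool) : nat := if b then 1%nat else 0%nat.
Definition cnt (n : nat) (f : nat -> R) (B : R -> bool) : nat := nsum n (fun i => ind (B (f i))).
Definition dclosed (B : R -> bool) : Prop := forall x y, x <= y -> B y = true -> B x = true.

Lemma cnt_sorted n f B : cnt n f B = nsum n (fun j => ind (B (f (sig f n j)))).
Proof. unfold cnt. rewrite <- lsum_seq, <- (lsum_perm _ _ _ (ordL_perm f n)), lsum_nth, ordL_len. auto. Qed.

Lemma G1 n f B N : dclosed B -> (N < n)%nat -> B (ordv f n N) = false -> (cnt n f B <= N)%nat.
Proof. intros Hd HN HB. rewrite cnt_sorted. apply nsum_le_N.
  intros i; unfold ind; destruct (B (f (sig f n i))); lia.
  intros i Hi Hin. unfold ind. destruct (B (f (sig f n i))) eqn:E; auto.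
  rewrite (Hd (ordv f n N) (f (sig f n i))) in HB; try discriminate; auto.
  unfold ordv. apply sig_sorted; auto. Qed.

Lemma G2 n f B N : dclosed B -> (N < n)%nat -> B (ordv f n N) = true -> (N + 1 <= cnt n f B)%nat.
Proof. intros Hd HN HB. rewrite cnt_sorted. apply nsum_ge_N; auto.
  intros i Hi. unfold ind. rewrite (Hd _ (ordv f n N)); auto.
  unfold ordv. apply sig_sorted; auto; lia. Qed.

Definition ltb (c x : R) : bool := if Rlt_dec x c then true else false.
Definition leb (c x : R) : bool := if Rle_dec x c then true else false.
Lemma ltb_dc c : dclosed (ltb c). Proof. intros x y H; unfold ltb; destruct (Rlt_dec y c), (Rlt_dec x c); auto; lra. Qed.
Lemma leb_dc c : dclosed (leb c). Proof. intros x y H; unfold leb; destruct (Rle_dec y c), (Rle_dec x c); auto; lra. Qed.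

Lemma ord_neg n f N : (N < cnt n f (ltb 0))%nat -> (N < n)%nat -> ordv f n N < 0.
Proof. intros H HN. destruct (Rlt_dec (ordv f n N) 0); auto.
  assert (ltb 0 (ordv f n N) = false) by (unfold ltb; destruct (Rlt_dec _ 0); auto; lra).
  pose proof (G1 n f _ N (ltb_dc 0) HN H0). lia. Qed.

Lemma ord_pos n f N : (cnt n f (leb 0) <= N)%nat -> (N < n)%nat -> 0 < ordv f n N.
Proof. intros H HN. destruct (Rlt_dec 0 (ordv f n N)); auto.
  assert (leb 0 (ordv f n N) = true) by (unfold leb; destruct (Rle_dec _ 0); auto; lra).
  pose proof (G2 n f _ N (leb_dc 0) HN H0). lia. Qed.

Lemma nsum_mono n g h : (forall i, (i < n)%nat -> (g i <= h i)%nat) -> (nsum n g <= nsum n h)%nat.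
Proof. induction n; simpl; intros; auto. specialize (IHn ltac:(auto)). specialize (H n ltac:(lia)). lia. Qed.

Lemma Rabs_le_inv a b : Rabs a <= b -> - b <= a <= b.
Proof. unfold Rabs; destruct (Rcase_abs a); lra. Qed.

Lemma ord_lip1 n f g d N : (N < n)%nat -> (forall i, (i < n)%nat -> Rabs (f i - g i) <= d) ->
  ordv g n N <= ordv f n N + d.
Proof. intros HN H. set (c := ordv f n N).
  pose proof (G2 n f (leb c) N (leb_dc c) HN) as H2.
  assert (leb c c = true) by (unfold leb; destruct (Rle_dec c c); auto; lra).
  specialize (H2 H0).
  assert (Hm : (cnt n f (leb c) <= cnt n g (leb (c + d)))%nat).
  { apply nsum_mono. intros i Hi. specialize (H i Hi). apply Rabs_le_inv in H.
    unfold ind, leb. destruct (Rle_dec (f i) c), (Rle_dec (g i) (c + d)); lia || lra. }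
  destruct (Rle_dec (ordv g n N) (c + d)); auto.
  assert (leb (c + d) (ordv g n N) = false) by (unfold leb; destruct (Rle_dec _ (c+d)); auto; lra).
  pose proof (G1 n g _ N (leb_dc _) HN H1). lia. Qed.

Lemma ord_lip n f g d N : (N < n)%nat -> (forall i, (i < n)%nat -> Rabs (f i - g i) <= d) ->
  Rabs (ordv f n N - ordv g n N) <= d.
Proof. intros HN H. apply Rabs_le. split.
  - pose proof (ord_lip1 n f g d N HN H). lra.
  - assert (H' : forall i, (i < n)%nat -> Rabs (g i - f i) <= d) by (intros; rewrite Rabs_minus_sym; auto).
    pose proof (ord_lip1 n g f d N HN H'). lra. Qed.

Lemma sorted_eigs n M f U : 
  (forall i j, (i < n)%nat -> (j < n)%nat ->
       csum n (fun k => Cmul (Cconj (U k i)) (U k j)) = Imat i j) ->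
  (forall i j, (i < n)%nat -> (j < n)%nat ->
       csum n (fun k => Cmul (M i k) (U k j)) = Cmul (U i j) (RtoC (f j))) ->
  is_sorted_eigs n M (fun j => ordv f n j).
Proof. intros HU HE. split.
  - intros j Hj. unfold ordv. apply sig_sorted; lia.
  - exists (fun k j => U k (sig f n j)). split.
    + intros i j Hi Hj. rewrite HU by (apply sig_lt; auto). unfold Imat.
      destruct (Nat.eqb_spec (sig f n i) (sig f n j)), (Nat.eqb_spec i j); auto.
      apply sig_inj in e; auto; contradiction. subst; contradiction.
    + intros i j Hi Hj. rewrite HE; auto. apply sig_lt; auto. Qed.

Lemma nsum_app a b g : nsum (a + b) g = (nsum a g + nsum b (fun i => g (a + i)))%nat.
Proof. induction b; simpl. rewrite Nat.add_0_r; lia. rewrite Nat.add_succ_r; simpl. rewrite IHb. lia. Qed.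

Lemma nsum_prod p q g : nsum (p * q) g = nsum p (fun a => nsum q (fun b => g (a * q + b)%nat)).
Proof. induction p; simpl; auto. rewrite Nat.add_comm, nsum_app, IHp. auto. Qed.

Lemma nsum_rev n g : nsum n g = nsum n (fun i => g (n - 1 - i)%nat).
Proof. induction n; auto. transitivity (nsum n g + g n)%nat; [reflexivity|].
  rewrite (nsum_shift n (fun i => g (S n - 1 - i)%nat)). rewrite IHn.
  replace (S n - 1 - 0)%nat with n by lia. rewrite Nat.add_comm. f_equal.
  apply nsum_ext; intros. f_equal. lia. Qed.

Lemma lsum_map s l g : lsum (map s l) g = lsum l (fun i => g (s i)).
Proof. induction l; simpl; auto. Qed.

Lemma nodup_map_inv (s : nat -> nat) (l : list nat) : (forall x y, In x l -> In y l -> s x = s y -> x = y) -> NoDup l -> NoDup (map s l).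
Proof. induction l; simpl; intros H ND. constructor. inversion ND; subst. constructor.
  - intro Hin. apply in_map_iff in Hin as [y [Hy Hy']]. assert (y = a) by (apply H; auto). subst; auto.
  - apply IHl; auto. Qed.

Lemma nsum_bij n s g : (forall i, (i < n)%nat -> (s i < n)%nat) -> (forall i, (i < n)%nat -> s (s i) = i) ->
  nsum n (fun i => g (s i)) = nsum n g.
Proof. intros H1 H2. rewrite <- !lsum_seq, <- lsum_map. apply lsum_perm. apply NoDup_Permutation.
  - apply nodup_map_inv. intros x y Hx Hy E. apply in_seq in Hx, Hy. rewrite <- (H2 x), <- (H2 y), E by lia; auto.
    apply seq_NoDup.
  - apply seq_NoDup.
  - intros x; split; intros Hx.
    + apply in_map_iff in Hx as [y [<- Hy]]. apply in_seq in Hy. apply in_seq. specialize (H1 y). lia.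
    + apply in_seq in Hx. apply in_map_iff. exists (s x). split. apply H2; lia. apply in_seq. specialize (H1 x). lia. Qed.

Lemma Rabs_sin_le x : Rabs (sin x) <= Rabs x.
Proof.
  assert (K : forall y, 0 <= y -> Rabs (sin y) <= y).
  { intros y Hy. apply Rabs_le. split.
    - destruct (Rle_dec y PI). pose proof (sin_ge_0 y Hy r). lra.
      pose proof (SIN_bound y). pose proof PI2_3_2. pose proof PI_4. lra.
    - destruct (Req_dec y 0). subst; rewrite sin_0; lra. pose proof (sin_lt_x y). lra. }
  destruct (Rle_dec 0 x). rewrite (Rabs_right x) by lra. auto.
  replace (Rabs x) with (-x) by (rewrite Rabs_left; lra). rewrite <- (Ropp_involutive x) at 1. rewrite sin_neg, Rabs_Ropp. apply K; lra. Qed.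

Lemma cos_lip a b : Rabs (cos a - cos b) <= Rabs (a - b).
Proof. rewrite form2. rewrite !Rabs_mult.
  pose proof (Rabs_sin_le ((a - b) / 2)). pose proof (SIN_bound ((a+b)/2)).
  assert (Rabs (sin ((a + b) / 2)) <= 1) by (apply Rabs_le; lra).
  replace (Rabs (-2)) with 2 by (rewrite Rabs_left; lra).
  replace (Rabs ((a - b) / 2)) with (Rabs (a - b) / 2) in H.
  2: { unfold Rdiv. rewrite Rabs_mult, (Rabs_right (/2)); lra. }
  assert (0 <= Rabs (sin ((a - b) / 2))) by apply Rabs_pos.
  assert (0 <= Rabs (sin ((a + b) / 2))) by apply Rabs_pos.
  nra. Qed.

Lemma INR4m m : INR (4 * m) = 4 * INR m.
Proof. rewrite mult_INR; simpl; ring. Qed.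

Lemma zfree p m o k l th : (0 < p)%nat -> (0 < m)%nat -> Nat.Odd o -> th = PI * INR o / (4 * INR m) ->
  lam p th k + lam (4 * m) 0 l <> 0.
Proof. intros Hp Hm [u Hu] Hth H. unfold lam, alpha in H. rewrite INR4m in H.
  assert (HpR : 0 < INR p) by (apply lt_0_INR; lia).
  assert (HmR : 0 < INR m) by (apply lt_0_INR; lia).
  assert (HPI := PI_RGT_0).
  set (x := (th + 2 * PI * INR k) / INR p) in H.
  set (z := (0 + 2 * PI * INR l) / (4 * INR m)) in H.
  assert (Hc : cos x + cos z = 0) by lra. rewrite form1 in Hc.
  assert (Hcase : cos ((x - z) / 2) = 0 \/ cos ((x + z) / 2) = 0).
  { apply Rmult_integral in Hc as [Hc|Hc]; auto. apply Rmult_integral in Hc as [Hc|Hc]; auto. lra. }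
  assert (Hgen : forall s : R, (s = 1 \/ s = -1) -> cos ((x + s * z) / 2) = 0 -> False).
  { intros s Hs Hz. apply cos_eq_0_0 in Hz as [t Ht].
    assert (HR : INR o + 8 * INR m * INR k + s * (2 * INR p * INR l) = (2 * IZR t + 1) * (4 * INR m * INR p)).
    { apply (Rmult_eq_reg_l (PI / (8 * INR m * INR p))).
      2: { apply Rmult_integral_contrapositive; split; [lra|]. apply Rinv_neq_0_compat. nra. }
      replace (PI / (8 * INR m * INR p) * (INR o + 8 * INR m * INR k + s * (2 * INR p * INR l)))
        with ((x + s * z) / 2) by (unfold x, z; rewrite Hth; field; lra).
      rewrite Ht. field. lra. }
    destruct Hs as [-> | ->].
    - assert (HZ : IZR (Z.of_nat o + 8 * Z.of_nat m * Z.of_nat k + 2 * Z.of_nat p * Z.of_nat l) =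
                   IZR ((2 * t + 1) * (4 * Z.of_nat m * Z.of_nat p))).
      { rewrite ?plus_IZR, ?mult_IZR, ?plus_IZR, ?mult_IZR, <- ?INR_IZR_INZ. lra. }
      apply eq_IZR in HZ. subst o. rewrite Nat2Z.inj_add, Nat2Z.inj_mul in HZ.
      assert (E : (2 * (Z.of_nat u + 4 * Z.of_nat m * Z.of_nat k + Z.of_nat p * Z.of_nat l) + 1 =
                  2 * ((2 * t + 1) * (2 * Z.of_nat m * Z.of_nat p)))%Z).
      { simpl Z.of_nat in HZ. lia. }
      lia.
    - assert (HZ : IZR (Z.of_nat o + 8 * Z.of_nat m * Z.of_nat k - 2 * Z.of_nat p * Z.of_nat l) =
                   IZR ((2 * t + 1) * (4 * Z.of_nat m * Z.of_nat p))).
      { rewrite ?plus_IZR, ?minus_IZR, ?mult_IZR, ?plus_IZR, ?mult_IZR, <- ?INR_IZR_INZ. lra. }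
      apply eq_IZR in HZ. subst o. rewrite Nat2Z.inj_add, Nat2Z.inj_mul in HZ.
      assert (E : (2 * (Z.of_nat u + 4 * Z.of_nat m * Z.of_nat k - Z.of_nat p * Z.of_nat l) + 1 =
                  2 * ((2 * t + 1) * (2 * Z.of_nat m * Z.of_nat p)))%Z).
      { simpl Z.of_nat in HZ. lia. }
      lia. }
  destruct Hcase as [Hz|Hz].
  - apply (Hgen (-1)); auto. replace (x + -1 * z) with (x - z) by ring; auto.
  - apply (Hgen 1); auto. replace (x + 1 * z) with (x + z) by ring; auto.
Qed.

Lemma lam_bound r th k : -2 <= lam r th k <= 2.
Proof. unfold lam. pose proof (COS_bound (alpha r th k)). lra. Qed.

Lemma B0 m : (0 < m)%nat -> lam (4 * m) 0 0 = 2.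
Proof. intros. unfold lam, alpha. replace ((0 + 2 * PI * INR 0) / INR (4 * m)) with 0.
  rewrite cos_0; ring. rewrite INR4m. simpl. field. apply not_0_INR; lia. Qed.

Lemma B2m m : (0 < m)%nat -> lam (4 * m) 0 (2 * m) = -2.
Proof. intros. unfold lam, alpha. rewrite INR4m, mult_INR. replace ((0 + 2 * PI * (INR 2 * INR m)) / (4 * INR m)) with PI.
  rewrite cos_PI; ring. simpl. field. apply not_0_INR; lia. Qed.

Lemma Bsym m l : (0 < m)%nat -> (l <= 4 * m)%nat -> lam (4 * m) 0 (4 * m - l) = lam (4 * m) 0 l.
Proof. intros. unfold lam, alpha. rewrite minus_INR by auto. rewrite INR4m.
  replace ((0 + 2 * PI * (4 * INR m - INR l)) / (4 * INR m)) with (- ((0 + 2 * PI * INR l) / (4 * INR m)) + 2 * INR 1 * PI).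
  rewrite cos_period, cos_neg; auto. simpl. field. apply not_0_INR; lia. Qed.

Lemma nsum1 g : nsum 1 g = g 0%nat. Proof. reflexivity. Qed.

Lemma inner m A : (0 < m)%nat -> -2 <= A <= 2 -> (forall l, (l < 4 * m)%nat -> A + lam (4 * m) 0 l <> 0) ->
  nsum (4 * m) (fun b => ind (ltb 0 (A + lam (4 * m) 0 b))) =
  (1 + 2 * nsum (2 * m - 1) (fun i => ind (ltb 0 (A + lam (4 * m) 0 (1 + i)))))%nat.
Proof. intros Hm HA Hz. set (h := fun b => ind (ltb 0 (A + lam (4 * m) 0 b))).
  replace (4 * m)%nat with (1 + (2 * m - 1) + 1 + (2 * m - 1))%nat at 1 by lia.
  rewrite !nsum_app, !nsum1.
  assert (h0 : h 0%nat = 0%nat).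
  { unfold h, ind, ltb. rewrite B0 by auto. destruct (Rlt_dec (A + 2) 0); auto; lra. }
  assert (h2 : h (1 + (2 * m - 1) + 0)%nat = 1%nat).
  { replace (1 + (2 * m - 1) + 0)%nat with (2 * m)%nat by lia.
    unfold h, ind, ltb. specialize (Hz (2 * m)%nat ltac:(lia)). rewrite B2m in * by auto.
    destruct (Rlt_dec (A + -2) 0); auto; lra. }
  rewrite h0, h2.
  rewrite (nsum_rev (2 * m - 1) (fun i => h (1 + (2 * m - 1) + 1 + i)%nat)).
  rewrite (nsum_ext _ (fun i => h (1 + (2 * m - 1) + 1 + (2 * m - 1 - 1 - i)))%nat (fun i => h (1 + i)%nat)).
  - change (nsum (2*m-1) (fun i => ind (ltb 0 (A + lam (4*m) 0 (1+i))))) with (nsum (2*m-1) (fun i => h (1+i)%nat)). lia.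
  - intros i Hi. unfold h. f_equal. f_equal. f_equal.
    replace (1 + (2 * m - 1) + 1 + (2 * m - 1 - 1 - i))%nat with (4 * m - (1 + i))%nat by lia.
    apply Bsym; lia. Qed.

Lemma nsum_12 n g : nsum n (fun a => 1 + 2 * g a)%nat = (n + 2 * nsum n g)%nat.
Proof. induction n; auto. transitivity (nsum n (fun a => 1 + 2 * g a) + (1 + 2 * g n))%nat; [reflexivity|]. rewrite IHn. simpl. lia. Qed.

Lemma mu_split p q th ph a b : (b < q)%nat -> mu p q th ph (a * q + b) = lam p th a + lam q ph b.
Proof. intros. unfold mu. rewrite divq, modq; auto. Qed.

Lemma cnt_odd p m th : Nat.Odd p -> (0 < m)%nat ->
  (forall k l, (k < p)%nat -> (l < 4 * m)%nat -> lam p th k + lam (4 * m) 0 l <> 0) ->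
  Nat.Odd (cnt (p * (4 * m)) (mu p (4 * m) th 0) (ltb 0)).
Proof. intros Hp Hm Hz. unfold cnt. rewrite nsum_prod.
  rewrite (nsum_ext _ _ (fun a => 1 + 2 * nsum (2 * m - 1) (fun i => ind (ltb 0 (lam p th a + lam (4 * m) 0 (1 + i)))))%nat).
  - rewrite (nsum_12 p (fun a => nsum (2*m-1) (fun i => ind (ltb 0 (lam p th a + lam (4*m) 0 (1+i)))))). destruct Hp as [u ->]. exists (u + nsum (2 * u + 1) (fun a => nsum (2 * m - 1)
      (fun i => ind (ltb 0 (lam (2 * u + 1) th a + lam (4 * m) 0 (1 + i))))))%nat. lia.
  - intros a Ha. rewrite <- inner; auto. apply nsum_ext; intros b Hb. rewrite mu_split; auto.
    apply lam_bound. Qed.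

Definition fk (n0 k : nat) : nat := if Nat.leb k n0 then (n0 - k)%nat else (n0 + (2 * n0 + 1) - k)%nat.
Definition gl (m l : nat) : nat := if Nat.ltb l (2 * m) then (l + 2 * m)%nat else (l - 2 * m)%nat.

Lemma fk_lt n0 k : (k < 2 * n0 + 1)%nat -> (fk n0 k < 2 * n0 + 1)%nat.
Proof. unfold fk; destruct (Nat.leb_spec k n0); lia. Qed.
Lemma fk_inv n0 k : (k < 2 * n0 + 1)%nat -> fk n0 (fk n0 k) = k.
Proof. unfold fk; destruct (Nat.leb_spec k n0); [destruct (Nat.leb_spec (n0 - k) n0)|destruct (Nat.leb_spec (n0 + (2 * n0 + 1) - k) n0)]; lia. Qed.
Lemma gl_lt m l : (l < 4 * m)%nat -> (gl m l < 4 * m)%nat.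
Proof. unfold gl; destruct (Nat.ltb_spec l (2 * m)); lia. Qed.
Lemma gl_inv m l : (l < 4 * m)%nat -> gl m (gl m l) = l.
Proof. unfold gl; destruct (Nat.ltb_spec l (2 * m)); [destruct (Nat.ltb_spec (l + 2 * m) (2 * m))|destruct (Nat.ltb_spec (l - 2 * m) (2 * m))]; lia. Qed.

Lemma lam_fk n0 th k : (k < 2 * n0 + 1)%nat -> lam (2 * n0 + 1) (PI - th) (fk n0 k) = - lam (2 * n0 + 1) th k.
Proof. intros Hk. unfold lam, alpha, fk.
  assert (Hp : INR (2 * n0 + 1) = 2 * INR n0 + 1) by (rewrite plus_INR, mult_INR; simpl; ring).
  assert (HpR : 0 < 2 * INR n0 + 1) by (pose proof (pos_INR n0); lra).
  rewrite Hp. destruct (Nat.leb_spec k n0).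
  - rewrite minus_INR by auto.
    replace ((PI - th + 2 * PI * (INR n0 - INR k)) / (2 * INR n0 + 1)) with (PI - (th + 2 * PI * INR k) / (2 * INR n0 + 1))
      by (field; lra).
    rewrite cos_minus, cos_PI, sin_PI. ring.
  - rewrite minus_INR by lia. rewrite plus_INR, Hp.
    replace ((PI - th + 2 * PI * (INR n0 + (2 * INR n0 + 1) - INR k)) / (2 * INR n0 + 1)) with
      ((PI - (th + 2 * PI * INR k) / (2 * INR n0 + 1)) + 2 * INR 1 * PI) by (simpl; field; lra).
    rewrite cos_period, cos_minus, cos_PI, sin_PI. ring. Qed.

Lemma lam_gl m l : (0 < m)%nat -> (l < 4 * m)%nat -> lam (4 * m) 0 (gl m l) = - lam (4 * m) 0 l.
Proof. intros Hm Hl. unfold lam, alpha, gl. rewrite INR4m.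
  assert (HmR : 0 < INR m) by (apply lt_0_INR; lia).
  destruct (Nat.ltb_spec l (2 * m)).
  - rewrite plus_INR, mult_INR.
    replace ((0 + 2 * PI * (INR l + INR 2 * INR m)) / (4 * INR m)) with ((0 + 2 * PI * INR l) / (4 * INR m) + PI)
      by (simpl; field; lra).
    rewrite neg_cos. ring.
  - rewrite minus_INR by lia. rewrite mult_INR.
    replace ((0 + 2 * PI * (INR l - INR 2 * INR m)) / (4 * INR m)) with ((0 + 2 * PI * INR l) / (4 * INR m) - PI)
      by (simpl; field; lra).
    rewrite cos_minus, cos_PI, sin_PI. ring. Qed.

Definition sg (n0 m j : nat) : nat := (fk n0 (j / (4 * m)) * (4 * m) + gl m (j mod (4 * m)))%nat.

Lemma jsplit m j : (0 < m)%nat -> j = (j / (4 * m) * (4 * m) + j mod (4 * m))%nat.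
Proof. intros. rewrite Nat.mul_comm. apply Nat.div_mod_eq. Qed.

Lemma sg_props n0 m j : (0 < m)%nat -> (j < (2 * n0 + 1) * (4 * m))%nat ->
  (sg n0 m j < (2 * n0 + 1) * (4 * m))%nat /\ sg n0 m (sg n0 m j) = j /\
  (sg n0 m j / (4 * m) = fk n0 (j / (4 * m)))%nat /\ (sg n0 m j mod (4 * m) = gl m (j mod (4 * m)))%nat.
Proof. intros Hm Hj.
  assert (H1 : (j / (4 * m) < 2 * n0 + 1)%nat) by (apply Nat.Div0.div_lt_upper_bound; lia).
  assert (H2 : (j mod (4 * m) < 4 * m)%nat) by (apply Nat.mod_upper_bound; lia).
  pose proof (fk_lt _ _ H1). pose proof (gl_lt _ _ H2).
  assert (D : (sg n0 m j / (4 * m) = fk n0 (j / (4 * m)))%nat) by (unfold sg; apply divq; auto).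
  assert (M : (sg n0 m j mod (4 * m) = gl m (j mod (4 * m)))%nat) by (unfold sg; apply modq; auto).
  repeat split; auto.
  - unfold sg. nia.
  - unfold sg at 1. rewrite D, M, fk_inv, gl_inv by auto. symmetry; apply jsplit; auto. Qed.

Lemma mu_sym n0 m th j : (0 < m)%nat -> (j < (2 * n0 + 1) * (4 * m))%nat ->
  mu (2 * n0 + 1) (4 * m) (PI - th) 0 (sg n0 m j) = - mu (2 * n0 + 1) (4 * m) th 0 j.
Proof. intros Hm Hj. destruct (sg_props n0 m j Hm Hj) as [_ [_ [D M]]].
  unfold mu. rewrite D, M. rewrite lam_fk, lam_gl; auto. ring.
  apply Nat.mod_upper_bound; lia. apply Nat.Div0.div_lt_upper_bound; lia. Qed.

Lemma nsum_add n g h : nsum n (fun i => g i + h i)%nat = (nsum n g + nsum n h)%nat.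
Proof. induction n; auto. transitivity (nsum n (fun i => g i + h i) + (g n + h n))%nat; [reflexivity|].
  rewrite IHn. simpl. lia. Qed.

Lemma cnt_sym n0 m th : (0 < m)%nat ->
  (forall j, (j < (2 * n0 + 1) * (4 * m))%nat -> mu (2 * n0 + 1) (4 * m) th 0 j <> 0) ->
  (cnt ((2 * n0 + 1) * (4 * m)) (mu (2 * n0 + 1) (4 * m) (PI - th) 0) (ltb 0) +
   cnt ((2 * n0 + 1) * (4 * m)) (mu (2 * n0 + 1) (4 * m) th 0) (ltb 0) = (2 * n0 + 1) * (4 * m))%nat.
Proof. intros Hm Hz. unfold cnt.
  set (N := ((2 * n0 + 1) * (4 * m))%nat).
  rewrite <- (nsum_bij N (sg n0 m) (fun i => ind (ltb 0 (mu (2 * n0 + 1) (4 * m) (PI - th) 0 i)))).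
  2: { intros i Hi. apply sg_props; auto. }
  2: { intros i Hi. apply sg_props; auto. }
  rewrite <- nsum_add. transitivity (nsum N (fun _ => 1%nat)).
  - apply nsum_ext. intros i Hi. rewrite mu_sym by auto. specialize (Hz i Hi).
    unfold ind, ltb. destruct (Rlt_dec (- mu (2 * n0 + 1) (4 * m) th 0 i) 0), (Rlt_dec (mu (2 * n0 + 1) (4 * m) th 0 i) 0); auto; lra.
  - apply nsum_one; auto. Qed.

Lemma mu_lip p q th th' j : (0 < p)%nat -> Rabs (mu p q th 0 j - mu p q th' 0 j) <= 2 * Rabs (th - th').
Proof. intros Hp. unfold mu, lam, alpha.
  assert (HpR : 1 <= INR p) by (apply (le_INR 1); lia).
  replace (2 * cos ((th + 2 * PI * INR (j / q)) / INR p) + 2 * cos ((0 + 2 * PI * INR (j mod q)) / INR q) -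
    (2 * cos ((th' + 2 * PI * INR (j / q)) / INR p) + 2 * cos ((0 + 2 * PI * INR (j mod q)) / INR q)))
    with (2 * (cos ((th + 2 * PI * INR (j / q)) / INR p) - cos ((th' + 2 * PI * INR (j / q)) / INR p))) by ring.
  rewrite Rabs_mult, (Rabs_right 2) by lra. apply Rmult_le_compat_l; [lra|].
  eapply Rle_trans. apply cos_lip.
  replace ((th + 2 * PI * INR (j / q)) / INR p - (th' + 2 * PI * INR (j / q)) / INR p) with ((th - th') / INR p)
    by (field; lra).
  unfold Rdiv. rewrite Rabs_mult, (Rabs_right (/ INR p)).
  2: { apply Rle_ge, Rlt_le, Rinv_0_lt_compat; lra. }
  assert (/ INR p <= 1). { rewrite <- Rinv_1. apply Rinv_le_contravar; lra. }
  pose proof (Rabs_pos (th - th')). nra. Qed.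

Definition Fo (p q N : nat) (th : R) : R := ordv (mu p q th 0) (p * q) N.

Lemma Fo_lip p q N th th' : (0 < p)%nat -> (N < p * q)%nat -> Rabs (Fo p q N th - Fo p q N th') <= 2 * Rabs (th - th').
Proof. intros. unfold Fo. apply ord_lip; auto. intros; apply mu_lip; auto. Qed.

Lemma Fo_cont p q N x : (0 < p)%nat -> (N < p * q)%nat -> continuity_pt (Fo p q N) x.
Proof. intros Hp HN. unfold continuity_pt, continue_in, limit1_in, limit_in. intros eps Heps.
  exists (eps / 2). split. lra. intros y [_ Hy]. simpl in *. unfold R_dist in *.
  pose proof (Fo_lip p q N y x Hp HN). lra. Qed.

Lemma ivt_gen (F : R -> R) a b y : a < b -> (forall x, continuity_pt F x) ->
  ((F a < y < F b) \/ (F b < y < F a)) -> exists z, a <= z <= b /\ F z = y.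
Proof. intros Hab Hc [H|H].
  - destruct (Ranalysis5.IVT_interv (fun x => F x - y) a b) as [z [Hz1 Hz2]]; auto; try lra.
    intros; apply continuity_pt_minus; auto. apply continuity_pt_const; intros u v; auto.
    exists z; split; auto; lra.
  - destruct (Ranalysis5.IVT_interv (fun x => y - F x) a b) as [z [Hz1 Hz2]]; auto; try lra.
    intros; apply continuity_pt_minus; auto. apply continuity_pt_const; intros u v; auto.
    exists z; split; auto; lra. Qed.

Lemma cnt_le_n n f B : (cnt n f B <= n)%nat.
Proof. unfold cnt. induction n; simpl; auto. unfold ind at 2. destruct (B (f n)); lia. Qed.

Lemma cnt_lt_le n f : (forall j, (j < n)%nat -> f j <> 0) -> cnt n f (leb 0) = cnt n f (ltb 0).
Proof. intros H. unfold cnt. apply nsum_ext. intros i Hi. specialize (H i Hi). unfold ind, leb, ltb.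
  destruct (Rle_dec (f i) 0), (Rlt_dec (f i) 0); auto; lra. Qed.

Lemma in_band p q N th : (0 < p)%nat -> (0 < q)%nat -> EigOK p th -> EigOK q 0 -> 0 <= th <= PI ->
  band p q (S N) (Fo p q N th).
Proof. intros Hp Hq Ep Eq Hth. exists th, 0. split; auto. split. pose proof PI_RGT_0; lra.
  exists (fun j => ordv (mu p q th 0) (p * q) j). split.
  - apply sorted_eigs with (U := Ug p q th 0).
    + intros; apply Ug_unit; auto.
    + intros; apply Ug_eig; auto.
  - unfold Fo. f_equal. lia. Qed.

Theorem proposition3p4 (p q : nat) :
  Nat.Odd p -> (0 < q)%nat -> Nat.divide 4 q ->
  exists j : nat, (1 <= j <= p * q)%nat /\ in_interior (band p q j) 0.
Proof. intros Hp Hq [m Hm]. subst q. replace (m * 4)%nat with (4 * m)%nat in * by lia.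
  assert (Hm0 : (0 < m)%nat) by lia.
  pose proof Hp as Hp'. destruct Hp' as [n0 Hn0]. subst p.
  assert (HmR : 0 < INR m) by (apply lt_0_INR; lia).
  pose proof PI_RGT_0 as HPI.
  set (p := (2 * n0 + 1)%nat). set (q := (4 * m)%nat). set (n := (p * q)%nat).
  set (thA := PI * INR (2 * m + 1) / (4 * INR m)).
  set (thB := PI * INR (2 * m - 1) / (4 * INR m)).
  assert (HB : thB = PI - thA).
  { unfold thA, thB. rewrite minus_INR, plus_INR, mult_INR by lia. simpl. field. lra. }
  assert (HAB : thB < thA).
  { unfold thA, thB. rewrite minus_INR, plus_INR, mult_INR by lia. simpl.
    unfold Rdiv. apply Rmult_lt_compat_r. apply Rinv_0_lt_compat; lra. nra. }
  assert (HA0 : 0 <= thA <= PI).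
  { unfold thA. rewrite plus_INR, mult_INR. simpl. split.
    apply Rmult_le_pos. pose proof (pos_INR m); nra. left; apply Rinv_0_lt_compat; lra.
    apply (Rmult_le_reg_r (4 * INR m)). lra. unfold Rdiv. rewrite Rmult_assoc, Rinv_l by lra.
    assert (1 <= INR m) by (apply (le_INR 1); lia). nra. }
  assert (HB0 : 0 <= thB <= PI) by lra.
  assert (Zgen : forall o th, Nat.Odd o -> th = PI * INR o / (4 * INR m) ->
     forall j, (j < n)%nat -> mu p q th 0 j <> 0).
  { intros o th Ho Hth j Hj. unfold mu. apply (zfree p m o); auto; unfold p; lia. }
  assert (ZA : forall j, (j < n)%nat -> mu p q thA 0 j <> 0).
  { apply (Zgen (2 * m + 1)%nat); auto. exists m; lia. }
  assert (ZB : forall j, (j < n)%nat -> mu p q thB 0 j <> 0).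
  { apply (Zgen (2 * m - 1)%nat); auto. exists (m - 1)%nat; lia. }
  assert (Zkl : forall th o, Nat.Odd o -> th = PI * INR o / (4 * INR m) ->
     forall k l, (k < p)%nat -> (l < 4 * m)%nat -> lam p th k + lam (4 * m) 0 l <> 0).
  { intros th o Ho Hth k l _ _. apply (zfree p m o); auto; unfold p; lia. }
  set (NA := cnt n (mu p q thA 0) (ltb 0)). set (NB := cnt n (mu p q thB 0) (ltb 0)).
  assert (OA : Nat.Odd NA). { apply cnt_odd; auto. apply (Zkl thA (2 * m + 1)%nat); auto. exists m; lia. }
  assert (OB : Nat.Odd NB). { apply cnt_odd; auto. apply (Zkl thB (2 * m - 1)%nat); auto. exists (m - 1)%nat; lia. }
  assert (SAB : (NB + NA = n)%nat). { unfold NB, NA. rewrite HB. apply cnt_sym; auto. }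
  assert (NAB : NA <> NB).
  { intro E. destruct OA as [a Ha]. unfold n, p, q in SAB. lia. }
  assert (EigP : forall th, EigOK p th).
  { intros th. destruct n0; [apply EigOK1 | apply EigOK3; unfold p; lia]. }
  assert (EigQ : EigOK q 0) by (apply EigOK3; unfold q; lia).
  assert (Hp0 : (0 < p)%nat) by (unfold p; lia). assert (Hq0 : (0 < q)%nat) by (unfold q; lia).
  assert (Key : exists thP thQ, (cnt n (mu p q thQ 0) (ltb 0) < cnt n (mu p q thP 0) (ltb 0))%nat /\
     (forall j, (j < n)%nat -> mu p q thQ 0 j <> 0) /\
     ((thP = thA /\ thQ = thB) \/ (thP = thB /\ thQ = thA))).
  { destruct (Nat.lt_total NA NB) as [H|[H|H]]; [| lia |].
    - exists thB, thA. repeat split; auto.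
    - exists thA, thB. repeat split; auto. }
  destruct Key as [thP [thQ [HPQ [ZQ Hsel]]]].
  set (NP := cnt n (mu p q thP 0) (ltb 0)) in *.
  set (N := (NP - 1)%nat).
  assert (HNn : (N < n)%nat). { pose proof (cnt_le_n n (mu p q thP 0) (ltb 0)). unfold N, NP in *. lia. }
  assert (FP : Fo p q N thP < 0). { unfold Fo. fold n. apply ord_neg; auto. unfold N, NP in *. lia. }
  assert (FQ : 0 < Fo p q N thQ).
  { unfold Fo. fold n. apply ord_pos; auto. rewrite cnt_lt_le by auto. unfold N, NP in *. lia. }
  exists (S N). split. unfold n in HNn. lia.
  exists (Rmin (- Fo p q N thP) (Fo p q N thQ)). split.
  { apply Rmin_pos; lra. }
  intros y Hy. rewrite Rminus_0_r in Hy.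
  assert (Hy1 : Fo p q N thP < y < Fo p q N thQ).
  { pose proof (Rmin_l (- Fo p q N thP) (Fo p q N thQ)). pose proof (Rmin_r (- Fo p q N thP) (Fo p q N thQ)).
    unfold Rabs in Hy; destruct (Rcase_abs y); lra. }
  destruct (ivt_gen (Fo p q N) thB thA y) as [z [Hz Fz]]; auto.
  { intros; apply Fo_cont; auto. }
  { destruct Hsel as [[-> ->]|[-> ->]]; [right|left]; lra. }
  rewrite <- Fz. apply in_band; auto. lra.
Qed.
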